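(* For $a,b\ge0$ let $p_k(a,b)=\mathbb{P}(X-Y=k)$, $k\in\mathbb{Z}$, for independent $X\sim\mathrm{Poi}_a$, $Y\sim\mathrm{Poi}_b$. Then for all $a,b\ge0$ and all $N\ge1$, \[ \sum_{k\in\mathbb{Z}:\,|k|\ge\sqrt N}\sqrt{p_k(a,b)\,p_{-k}(a,b)}\le\frac{2\sqrt{ab}}{N}. \]
   Context: $\mathrm{Poi}_\lambda$ is the Poisson distribution with parameter $\lambda$, with $\mathrm{Poi}_0$ the point mass at $0$. *)

(* Defs.v *)
From HB Require Import structures.
From mathcomp Require Import all_boot all_order all_algebra.
From mathcomp Require Import all_classical all_reals all_analysis.
Set Implicit Arguments. Unset Strict Implicit. Unset Printing Implicit Defensive.
Import Order.TTheory GRing.Theory Num.Theory.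
Local Open Scope classical_set_scope.
Local Open Scope ring_scope.

(* Poisson pmf Poi_a(k) = a^k/k! e^{-a}; for a = 0 this is the point mass at 0
   (since 0^0 = 1). *)
Definition poi {R : realType} (a : R) (k : nat) : R :=
  a ^+ k / (k`!)%:R * expR (- a).

Definition pdiff {R : realType} (a b : R) (k : int) : \bar R :=
  \esum_(xy in [set xy : nat * nat | (xy.1%:Z - xy.2%:Z)%R = k])
     (poi a xy.1 * poi b xy.2)%:E.

(* Main.v *)
Require Import Defs.
From HB Require Import structures.
From mathcomp Require Import all_boot all_order all_algebra.
From mathcomp Require Import all_classical all_reals all_analysis.
From mathcomp Require Import ring lra zify.
Import Order.TTheory GRing.Theory Num.Theory.
Local Open Scope classical_set_scope.
Local Open Scope ring_scope.

Section S.
Context {R : realType}.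
Local Open Scope ereal_scope.

Lemma esum_shift (c : R) (h : nat -> R) : (0 <= c)%R -> (forall n, 0 <= h n)%R ->
  \esum_(n in [set: nat]) (n%:R * (c ^+ n / n`!%:R) * h n)%:E =
  c%:E * \esum_(m in [set: nat]) (c ^+ m / m`!%:R * h m.+1)%:E.
Proof.
move=> c0 h0.
have ge0 n : (0 <= n%:R * (c ^+ n / n`!%:R) * h n)%R.
  by rewrite !mulr_ge0 ?divr_ge0 ?exprn_ge0.
rewrite -!nneseries_esumT; last 2 first.
- by move=> n; rewrite lee_fin !mulr_ge0 ?divr_ge0 ?exprn_ge0.
- by move=> n; rewrite lee_fin.
rewrite (nneseries_recl (P := xpredT))// => [|k _]; last by rewrite lee_fin.
rewrite mul0r !mul0r add0e -nneseries_addn => [|i]; last by rewrite lee_fin.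
rewrite -nneseriesZl => [|i _]; last by rewrite lee_fin !mulr_ge0 ?divr_ge0 ?exprn_ge0.
apply: eq_eseriesr => i _; congr EFin.
rewrite addn1 factS natrM exprS.
have f0 : (i`!%:R : R) != 0%R by rewrite pnatr_eq0 -lt0n fact_gt0.
have i0 : (i.+1%:R : R) != 0%R by rewrite pnatr_eq0.
by field; rewrite f0 addrC natr1 i0.
Qed.

Lemma esumZ (T : choiceType) (S : set T) (a : T -> \bar R) (r : R) :
  (0 <= r)%R -> (forall i, 0 <= a i) ->
  \esum_(i in S) (r%:E * a i) = r%:E * \esum_(i in S) a i.
Proof.
move=> r0 a0; rewrite /esum -ereal_supZl//; last first.
  apply/set0P; exists 0; exists set0; first exact: fsets_set0.
  by rewrite fsbig_set0.
congr ereal_sup; apply/seteqP; split => x /=.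
  by move=> [X XS <-]; exists (\sum_(i \in X) a i); [exists X|rewrite ge0_mule_fsumr].
by move=> [_ [X XS <-] <-]; exists X => //; rewrite ge0_mule_fsumr.
Qed.

Lemma esum_exp (x : R) : (0 <= x)%R ->
  \esum_(n in [set: nat]) (x ^+ n / n`!%:R)%:E = (expR x)%:E.
Proof.
move=> x0; rewrite -nneseries_esumT; last first.
  by move=> n; rewrite lee_fin divr_ge0// exprn_ge0.
rewrite /expR -EFin_lim; last exact: is_cvg_series_exp_coeff.
apply/congr_lim/funext => n/=; rewrite /series/= -sumEFin//.
Qed.

Lemma esum_prod (f g : nat -> R) (F G : R) : (forall n, 0 <= f n)%R -> (forall n, 0 <= g n)%R ->
  \esum_(n in [set: nat]) (f n)%:E = F%:E -> \esum_(n in [set: nat]) (g n)%:E = G%:E ->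
  \esum_(k in [set: nat * nat]) (f k.1 * g k.2)%:E = (F * G)%:E.
Proof.
move=> f0 g0 EF EG.
have -> : [set: nat * nat] = [set: nat] `*`` (fun _ => [set: nat]).
  by apply/seteqP; split => -[x y].
rewrite -(@esum_esum _ _ _ _ _ (fun i j => (f i * g j)%:E)); last by move=> i j _ _; rewrite lee_fin mulr_ge0.
have inner i : \esum_(j in [set: nat]) (f i * g j)%:E = (G * f i)%:E.
  rewrite mulrC EFinM -EG -esumZ; [|exact: f0|by move=> j; rewrite lee_fin].
  by apply: eq_esum => j _; rewrite EFinM.
rewrite (eq_esum (fun i _ => inner i)).
under eq_esum do rewrite EFinM.
have G0 : (0 <= G)%R by rewrite -lee_fin -EG; apply: esum_ge0 => n _; rewrite lee_fin.
by rewrite esumZ ?EF -?EFinM 1?mulrC// => n; rewrite lee_fin.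
Qed.

Definition tc (c : R) (n : nat) : R := c ^+ n / n`!%:R.

Lemma tc_ge0 c n : (0 <= c)%R -> (0 <= tc c n)%R.
Proof. by move=> c0; rewrite /tc divr_ge0 ?exprn_ge0. Qed.

Lemma M0 c : (0 <= c)%R -> \esum_(n in [set: nat]) (tc c n)%:E = (expR c)%:E.
Proof. exact: esum_exp. Qed.

Lemma M1 c : (0 <= c)%R -> \esum_(n in [set: nat]) (n%:R * tc c n)%:E = (c * expR c)%:E.
Proof.
move=> c0; under eq_esum do rewrite -[X in X%:E]mulr1.
by rewrite (esum_shift c (fun=> 1%R))// ; under eq_esum do rewrite mulr1; rewrite esum_exp// EFinM.
Qed.

Lemma M2 c : (0 <= c)%R -> \esum_(n in [set: nat]) (n%:R ^+ 2 * tc c n)%:E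
   = (c * (c * expR c + expR c))%:E.
Proof.
move=> c0; under eq_esum do rewrite /tc expr2 mulrAC.
rewrite (esum_shift c (fun n => n%:R))//.
under eq_esum do rewrite -addn1 natrD mulrDr mulr1 EFinD [X in (X%:E + _)]mulrC.
have h1 := M1 c c0; have h0 := M0 c c0; rewrite /tc in h1 h0.
rewrite esumD ?h1 ?h0.
- by rewrite -EFinD -EFinM.
- by move=> i _; rewrite lee_fin mulr_ge0 // divr_ge0 ?exprn_ge0.
- by move=> i _; rewrite lee_fin divr_ge0 ?exprn_ge0.
Qed.

Lemma pairM c : (0 <= c)%R ->
  \esum_(k in [set: nat * nat]) ((k.1%:R - k.2%:R) ^+ 2 * (tc c k.1 * tc c k.2))%:E
  = (2 * c * (expR c * expR c))%:E.
Proof.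
move=> c0; set e := expR c.
have t0 n := tc_ge0 c n c0.
have n0 n : (0 <= n%:R :> R)%R by [].
have A : \esum_(k in [set: nat * nat]) ((k.1%:R ^+ 2 * tc c k.1) * tc c k.2)%:E
    = ((c * (c * e + e)) * e)%:E.
  exact: (@esum_prod (fun n => n%:R ^+ 2 * tc c n)%R (tc c) _ _ (fun n => mulr_ge0 (exprn_ge0 2 (n0 n)) (t0 n)) t0 (M2 c c0) (M0 c c0)).
have B : \esum_(k in [set: nat * nat]) (tc c k.1 * (k.2%:R ^+ 2 * tc c k.2))%:E
    = (e * (c * (c * e + e)))%:E.
  exact: (@esum_prod (tc c) (fun n => n%:R ^+ 2 * tc c n)%R _ _ t0 (fun n => mulr_ge0 (exprn_ge0 2 (n0 n)) (t0 n)) (M0 c c0) (M2 c c0)).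
have C : \esum_(k in [set: nat * nat]) ((k.1%:R * tc c k.1) * (k.2%:R * tc c k.2))%:E
    = ((c * e) * (c * e))%:E.
  exact: (@esum_prod (fun n => n%:R * tc c n)%R (fun n => n%:R * tc c n)%R _ _ (fun n => mulr_ge0 (n0 n) (t0 n)) (fun n => mulr_ge0 (n0 n) (t0 n)) (M1 c c0) (M1 c c0)).
set X := esum _ _.
match goal with |- ?L = _ => set XX := L end.
have X0 : 0 <= XX by apply: esum_ge0 => k _; rewrite lee_fin; apply: mulr_ge0; [exact: sqr_ge0|exact: mulr_ge0].
have H : XX + (2 * ((c * e) * (c * e)))%:E = ((c * (c * e + e)) * e + e * (c * (c * e + e)))%:E.
  rewrite EFinM -C -esumZ; [|by rewrite ler0n|by move=> k; rewrite lee_fin; apply: mulr_ge0; apply: mulr_ge0].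
  rewrite [in RHS]EFinD. rewrite -A -B -!esumD; last 4 first.
  - by move=> k _; rewrite lee_fin; apply: mulr_ge0 => //; apply: mulr_ge0.
  - by move=> k _; rewrite lee_fin; apply: mulr_ge0 => //; apply: mulr_ge0.
  - by move=> k _; rewrite lee_fin; apply: mulr_ge0; [exact: sqr_ge0|exact: mulr_ge0].
  - by move=> k _; rewrite lee_fin; apply: mulr_ge0; [rewrite ler0n|apply: mulr_ge0; apply: mulr_ge0].
  apply: eq_esum => k _; rewrite -!EFinM -!EFinD; congr EFin; ring.
move: X0 H; case: XX => [r _|_|] //=.
rewrite -EFinD => -[H]; congr EFin.
have -> : r = ((c * (c * e + e) * e + e * (c * (c * e + e))) - 2 * (c * e * (c * e)))%R by rewrite -H; ring.
ring.
Qed.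

Lemma esum_prop1 (T : choiceType) (S : set T) (u v w : T -> R) (al be : R) :
  (forall i, 0 <= u i)%R -> (forall i, 0 <= v i)%R -> (forall i, 0 <= w i)%R ->
  (forall i, w i ^+ 2 = u i * v i)%R ->
  (forall i, S i -> al * u i = be * v i)%R -> (0 < al)%R -> (0 <= be)%R ->
  (\esum_(i in S) (u i)%:E) * (\esum_(i in S) (v i)%:E) =
  (\esum_(i in S) (w i)%:E) * (\esum_(i in S) (w i)%:E).
Proof.
move=> u0 v0 w0 wuv prop al0 be0.
set r := (be / al)%R.
have r0 : (0 <= r)%R by rewrite divr_ge0 // ltW.
have uE i : S i -> u i = (r * v i)%R.
  by move=> Si; rewrite /r mulrAC -(prop i Si) mulrAC mulfV ?mul1r // gt_eqF.
have wE i : S i -> w i = (Num.sqrt r * v i)%R.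
  move=> Si; rewrite -[w i]ger0_norm // -sqrtr_sqr wuv uE // -mulrA -expr2.
  by rewrite sqrtrM // sqrtr_sqr ger0_norm.
rewrite (eq_esum (fun i Si => congr1 EFin (uE i Si))).
rewrite (eq_esum (fun i Si => congr1 EFin (wE i Si))).
under eq_esum do rewrite EFinM.
under [X in _ = X * _]eq_esum do rewrite EFinM.
under [X in _ = _ * X]eq_esum do rewrite EFinM.
have vv : forall i, 0 <= (v i)%:E by move=> i; rewrite lee_fin.
rewrite !esumZ // ?sqrtr_ge0 //.
set V := esum _ _.
by rewrite muleACA -EFinM -expr2 sqr_sqrtr // muleA.
Qed.

Lemma esum_prop (T : choiceType) (S : set T) (u v w : T -> R) (al be : R) :
  (forall i, 0 <= u i)%R -> (forall i, 0 <= v i)%R -> (forall i, 0 <= w i)%R ->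
  (forall i, w i ^+ 2 = u i * v i)%R ->
  (forall i, S i -> al * u i = be * v i)%R -> (0 <= al)%R -> (0 <= be)%R ->
  ((0 < al)%R \/ (0 < be)%R \/ (forall i, S i -> u i = 0%R)) ->
  (\esum_(i in S) (u i)%:E) * (\esum_(i in S) (v i)%:E) =
  (\esum_(i in S) (w i)%:E) * (\esum_(i in S) (w i)%:E).
Proof.
move=> u0 v0 w0 wuv prop al0 be0 [|[]].
- by move=> alp; apply: esum_prop1 wuv prop alp be0.
- move=> bep; rewrite muleC; apply: (@esum_prop1 _ _ v u w be al) => //.
  + by move=> i; rewrite wuv mulrC.
  + by move=> i Si; rewrite prop.
- move=> uz; rewrite (@esum1 _ _ S (fun i => (u i)%:E)); last by move=> i Si; rewrite uz.
  rewrite (@esum1 _ _ S (fun i => (w i)%:E)) ?mul0e //.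
  move=> i Si; apply/eqP; rewrite eqe; apply/eqP.
  by apply/eqP; rewrite -sqrf_eq0 wuv uz ?mul0r.
Qed.

Definition Dk (k : int) : set (nat * nat) := [set xy | (xy.1%:Z - xy.2%:Z)%R = k].
Definition uf (a b : R) (xy : nat * nat) : R := (poi a xy.1 * poi b xy.2)%R.
Definition vf (a b : R) (xy : nat * nat) : R := (poi a xy.2 * poi b xy.1)%R.
Definition wf (a b : R) (xy : nat * nat) : R :=
  (expR (- a) * expR (- b) * (tc (Num.sqrt (a * b)) xy.1 * tc (Num.sqrt (a * b)) xy.2))%R.

Lemma poi_ge0 (a : R) k : (0 <= a)%R -> (0 <= poi a k)%R.
Proof. by move=> a0; rewrite /poi mulr_ge0 ?divr_ge0 ?exprn_ge0 ?expR_ge0. Qed.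

Lemma pdiffN (a b : R) k : pdiff a b (- k) = \esum_(xy in Dk k) (vf a b xy)%:E.
Proof.
rewrite /pdiff (reindex_esum (Dk k) _ (fun xy => (xy.2, xy.1))) //.
split => //=.
- by move=> [x y]; rewrite /Dk /= => h; rewrite -h opprB.
- by move=> [i1 i2] [j1 j2] /= _ _ [] -> ->.
- move=> [x y] /= h; exists (y, x) => //=.
  by rewrite /Dk /= -[k]opprK -h opprB.
Qed.

Lemma wuv (a b : R) xy : (0 <= a)%R -> (0 <= b)%R ->
  (wf a b xy ^+ 2 = uf a b xy * vf a b xy)%R.
Proof.
move=> a0 b0; case: xy => x y; rewrite /wf /uf /vf /poi /tc /=.
have fx : (x`!%:R : R) != 0%R by rewrite pnatr_eq0 -lt0n fact_gt0.
have fy : (y`!%:R : R) != 0%R by rewrite pnatr_eq0 -lt0n fact_gt0.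
set c := Num.sqrt (a * b).
have cx n : (c ^+ n ^+ 2 = a ^+ n * b ^+ n)%R.
  by rewrite -exprM mulnC exprM sqr_sqrtr ?mulr_ge0 // exprMn.
have -> : ((expR (- a) * expR (- b) * (c ^+ x / x`!%:R * (c ^+ y / y`!%:R))) ^+ 2
   = expR (- a) ^+ 2 * expR (- b) ^+ 2 * (c ^+ x ^+ 2) * (c ^+ y ^+ 2) / (x`!%:R ^+ 2 * y`!%:R ^+ 2))%R.
  by field; rewrite fx fy.
rewrite !cx.
by field; rewrite fx fy.
Qed.

Lemma key (a b : R) (k : int) : (0 <= a)%R -> (0 <= b)%R -> k != 0%R ->
  pdiff a b k * pdiff a b (- k) =
  (\esum_(xy in Dk k) (wf a b xy)%:E) * (\esum_(xy in Dk k) (wf a b xy)%:E).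
Proof.
move=> a0 b0 k0; rewrite pdiffN.
change (pdiff a b k) with (\esum_(xy in Dk k) (uf a b xy)%:E).
have u0 xy : (0 <= uf a b xy)%R by rewrite mulr_ge0 ?poi_ge0.
have v0 xy : (0 <= vf a b xy)%R by rewrite mulr_ge0 ?poi_ge0.
have w0 xy : (0 <= wf a b xy)%R.
  by rewrite !mulr_ge0 ?expR_ge0 ?tc_ge0 ?sqrtr_ge0.
have hw xy := wuv a b xy a0 b0.
case: k k0 => [n|m] k0.
- have n0 : (0 < n)%N by case: n k0.
  apply: (@esum_prop _ _ _ _ _ (b ^+ n) (a ^+ n)) => //; rewrite ?exprn_ge0 //.
  + move=> [x y]; rewrite /Dk /= => h.
    have -> : x = (y + n)%N by lia.
    by rewrite /uf /vf /poi /= exprD [in RHS]exprD; ring.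
  + have [ap|] := ltrP 0 a; first by right; left; rewrite exprn_gt0.
    move=> ale; have az : a = 0%R by apply/le_anti; rewrite ale a0.
    right; right => -[x y]; rewrite /Dk /= => h.
    have -> : x = (y + n)%N by lia.
    by rewrite /uf /poi /= az expr0n addn_eq0 (negPf (lt0n_neq0 n0)) andbF !mul0r.
- apply: (@esum_prop _ _ _ _ _ (a ^+ m.+1) (b ^+ m.+1)) => //; rewrite ?exprn_ge0 //.
  + move=> [x y]; rewrite /Dk /= => h.
    have -> : y = (x + m.+1)%N by lia.
    by rewrite /uf /vf /poi /= exprD [in RHS]exprD; ring.
  + have [ap|] := ltrP 0 a; first by left; rewrite exprn_gt0.
    have [bp|] := ltrP 0 b; first by right; left; rewrite exprn_gt0.
    move=> ble _; have bz : b = 0%R by apply/le_anti; rewrite ble b0.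
    right; right => -[x y]; rewrite /Dk /= => h.
    have -> : y = (x + m.+1)%N by lia.
    by rewrite /uf /poi /= bz expr0n addnS /= !mul0r mulr0.
Qed.
End S.
Section S2.
Context {R : realType}.
Local Open Scope ereal_scope.
Lemma sqrt_fine_le (W : \bar R) : 0 <= W -> (Num.sqrt (fine (W * W)))%:E <= W.
Proof.
case: W => [r|_|] //=.
- by rewrite lee_fin => r0; rewrite /= -expr2 sqrtr_sqr ger0_norm.
- by rewrite leey.
Qed.
End S2.

Theorem lemma2 (R : realType) (a b : R) (N : nat) :
  0 <= a -> 0 <= b -> (1 <= N)%N ->
  (\esum_(k in [set k : int | (Num.sqrt (N%:R : R) <= (`|k|%:~R : R))%R])
     (Num.sqrt (fine (pdiff a b k * pdiff a b (- k))))%:E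
   <= (2 * Num.sqrt (a * b) / N%:R)%:E)%E.
Proof.
move=> a0 b0 N1.
set A := [set k : int | _].
have Npos : (0 < N%:R :> R) by rewrite ltr0n.
have w0 xy : (0 <= wf a b xy)%R.
  by rewrite !mulr_ge0 ?expR_ge0 ?tc_ge0 ?sqrtr_ge0.
have step1 : (\esum_(k in A) (Num.sqrt (fine (pdiff a b k * pdiff a b (- k))))%:E
   <= \esum_(k in A) \esum_(xy in Dk k) (wf a b xy)%:E)%E.
  apply: le_esum => k Ak.
  have k0 : k != 0.
    apply/negP => /eqP kz; move: Ak; rewrite /A /= kz normr0 /=.
    by rewrite leNgt sqrtr_gt0 Npos.
  rewrite key //; apply: sqrt_fine_le; apply: esum_ge0 => xy _; rewrite lee_fin.
  exact: w0.
apply: (le_trans step1).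
rewrite esum_esum; last by move=> k xy _ _; rewrite lee_fin.
set c := Num.sqrt (a * b).
set h := fun xy : nat * nat => (((xy.1%:R - xy.2%:R) ^+ 2 / N%:R) * wf a b xy)%R.
have h0 xy : 0 <= h xy by rewrite mulr_ge0 ?divr_ge0 ?sqr_ge0.
have step3 : (\esum_(z in A `*`` Dk) (wf a b z.2)%:E <= \esum_(z in A `*`` Dk) (h z.2)%:E)%E.
  apply: le_esum => -[k [x y]] [Ak Dxy] /=; rewrite lee_fin /h.
  apply: ler_peMl => //; rewrite ler_pdivlMr // mul1r.
  move: Dxy; rewrite /Dk /= => Dxy.
  have kE : (k%:~R : R) = x%:R - y%:R by rewrite -Dxy intrB.
  rewrite -kE -(real_normK (num_real _)) -intr_norm.
  rewrite -[N%:R]sqr_sqrtr ?ler0n // !expr2.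
  by apply: ler_pM => //; exact: sqrtr_ge0.
apply: (le_trans step3).
set P := [set xy : nat * nat | A (xy.1%:Z - xy.2%:Z)%R].
rewrite (reindex_esum P (A `*`` Dk) (fun xy => ((xy.1%:Z - xy.2%:Z)%R, xy)) (fun z => (h z.2)%:E)); last first.
  split => /=.
  - by move=> [x y] Pxy; split => //=.
  - by move=> [x1 y1] [x2 y2] _ _ [] _ -> ->.
  - move=> [k [x y]] [Ak Dxy] /=; rewrite /Dk /= in Dxy.
    by exists (x, y); [rewrite /P /= Dxy | rewrite Dxy].
apply: (@le_trans _ _ (\esum_(xy in [set: nat * nat]) (h xy)%:E)%E).
  rewrite esum_mkcond; apply: le_esum => xy _ /=.
  by case: ifP => _ //; rewrite lee_fin.
have hE xy : h xy = ((expR (- a) * expR (- b) / N%:R) *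
    ((xy.1%:R - xy.2%:R) ^+ 2 * (tc c xy.1 * tc c xy.2)))%R by rewrite /h /wf; ring.
under eq_esum do rewrite hE EFinM.
have c0 : 0 <= c by exact: sqrtr_ge0.
rewrite esumZ; last 2 first.
- by rewrite !mulr_ge0 ?expR_ge0 ?invr_ge0 ?ler0n.
- by move=> xy; rewrite lee_fin; apply: mulr_ge0; [exact: sqr_ge0|apply: mulr_ge0; exact: tc_ge0].
rewrite pairM // -EFinM lee_fin.
have cab : 2 * c <= a + b.
  have -> : c = Num.sqrt a * Num.sqrt b by rewrite /c sqrtrM.
  have sa := sqrtr_ge0 a; have sb := sqrtr_ge0 b.
  rewrite -{2}(sqr_sqrtr a0) -{2}(sqr_sqrtr b0) -subr_ge0.
  have -> : forall u v : R, u ^+ 2 + v ^+ 2 - 2 * (u * v) = (u - v) ^+ 2 by move=> u v; ring.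
  exact: sqr_ge0.
have ce : expR (- a) * expR (- b) * (expR c * expR c) <= 1.
  by rewrite -!expRD expR_le1; lra.
rewrite [X in X <= _](_ : _ = (2 * c / N%:R) * (expR (- a) * expR (- b) * (expR c * expR c))); last by ring.
apply: ler_piMr => //.
by rewrite !mulr_ge0 ?invr_ge0 ?ler0n.
Qed.
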